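(* Let $n\ge 1$, $d\ge 2$ and $k_1,\dots,k_n\in\{1,\dots,d\}$. Let $\rho$ be a state on $(\mathbb{C}^d)^{\otimes n}$ that can be written as $\rho=\sum_j p_j|\psi_j\rangle\langle\psi_j|$ with $p_j\ge 0$, $\sum_j p_j=1$, where for every $j$ and every $i\in\{1,\dots,n\}$ the single-party reduced state $\mathrm{Tr}_{\overline{\{i\}}}|\psi_j\rangle\langle\psi_j|$ has rank at most $k_i$. Then $$\mathcal{C}_2(\rho)\le d^n+n-1-\sum_{i=1}^n\frac{d}{k_i}.$$
   Context: Consider $n$ qudits with Hilbert space $(\mathbb{C}^d)^{\otimes n}$. Let $\lambda_0=\mathbb{1}_d$ and let $\lambda_1,\dots,\lambda_{d^2-1}$ be Hermitian traceless $d\times d$ matrices normalized so that $\mathrm{Tr}[\lambda_i\lambda_j]=d\,\delta_{ij}$. For a nonempty subset $\alpha\subseteq\{1,\dots,n\}$ and a state $\rho$ with reduced state $\rho_\alpha$, define $\|\tau_\alpha(\rho)\|^2=\sum_{(i_k)_{k\in\alpha}\in\{1,\dots,d^2-1\}^{\alpha}}\big(\mathrm{Tr}[\rho_\alpha\bigotimes_{k\in\alpha}\lambda_{i_k}]\big)^2$, and $\mathcal{C}_2(\rho)=\sum_{|\alpha|\ge 2}\|\tau_\alpha(\rho)\|^2$. *)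

(* Defs.v *)
From HB Require Import structures.
From mathcomp Require Import all_boot all_order all_algebra.
From mathcomp Require Import complex.
Set Implicit Arguments. Unset Strict Implicit. Unset Printing Implicit Defensive.
Import Order.TTheory GRing.Theory Num.Theory.
Local Open Scope ring_scope.

(* Computational basis labels of (C^d)^{\otimes n}: functions 'I_n -> 'I_d. *)
Definition cfg (n d : nat) := {ffun 'I_n -> 'I_d}.

(* Operators on (C^d)^{\otimes n} as matrices indexed by basis labels. *)
Definition op (R : rcfType) (n d : nat) := cfg n d -> cfg n d -> R[i].

Definition hermitian_mx (R : rcfType) (d : nat) (A : 'M[R[i]]_d) : Prop :=
  forall a b : 'I_d, A a b = (A b a)^*.

Definition gm_basis (R : rcfType) (d : nat) (lam : 'I_(d ^ 2) -> 'M[R[i]]_d) : Prop :=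
  [/\ forall i : 'I_(d ^ 2), val i = 0%N -> lam i = 1%:M,
      forall i : 'I_(d ^ 2), hermitian_mx (lam i),
      forall i : 'I_(d ^ 2), val i <> 0%N -> \tr (lam i) = 0 &
      forall i j : 'I_(d ^ 2), (1 <= val i)%N -> (1 <= val j)%N ->
        \tr (lam i *m lam j) = d%:R * (i == j)%:R].

Definition tensor_op (R : rcfType) (n d : nat) (lam : 'I_(d ^ 2) -> 'M[R[i]]_d)
  (s : {ffun 'I_n -> 'I_(d ^ 2)}) : op R n d :=
  fun x y => \prod_(k : 'I_n) lam (s k) (x k) (y k).

Definition tr_op (R : rcfType) (n d : nat) (rho A : op R n d) : R[i] :=
  \sum_(x : cfg n d) \sum_(y : cfg n d) rho x y * A y x.

(* Tr[rho_alpha \bigotimes_{k in alpha} lambda_{i_k}], written as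
   Tr[rho (\bigotimes_{k in alpha} lambda_{i_k} \otimes 1_{rest})], where the
   multi-index (i_k)_{k in alpha} is extended by 0 (lambda_0 = 1) outside alpha. *)
Definition corr (R : rcfType) (n d : nat) (lam : 'I_(d ^ 2) -> 'M[R[i]]_d)
  (rho : op R n d) (s : {ffun 'I_n -> 'I_(d ^ 2)}) : R[i] :=
  tr_op rho (tensor_op lam s).

(* ||tau_alpha(rho)||^2: sum over multi-indices with entries in {1..d^2-1}
   exactly on alpha (and 0, i.e. identity, outside alpha). *)
Definition tau_norm2 (R : rcfType) (n d : nat) (lam : 'I_(d ^ 2) -> 'M[R[i]]_d)
  (rho : op R n d) (alpha : {set 'I_n}) : R[i] :=
  \sum_(s : {ffun 'I_n -> 'I_(d ^ 2)} |
          [forall k : 'I_n, (val (s k) != 0%N) == (k \in alpha)])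
    (corr lam rho s) ^+ 2.

Definition C2 (R : rcfType) (n d : nat) (lam : 'I_(d ^ 2) -> 'M[R[i]]_d)
  (rho : op R n d) : R[i] :=
  \sum_(alpha : {set 'I_n} | (2 <= #|alpha|)%N) tau_norm2 lam rho alpha.

Definition unit_vec (R : rcfType) (n d : nat) (psi : cfg n d -> R[i]) : Prop :=
  \sum_(x : cfg n d) psi x * (psi x)^* = 1.

Definition reduced1 (R : rcfType) (n d : nat) (psi : cfg n d -> R[i]) (i : 'I_n)
  : 'M[R[i]]_d :=
  \matrix_(a < d, b < d)
    \sum_(x : cfg n d | x i == a) \sum_(y : cfg n d |
        (y i == b) && [forall k : 'I_n, (k != i) ==> (x k == y k)])
      psi x * (psi y)^*.

(* Main.v *)
Require Import Defs.
From HB Require Import structures.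
From mathcomp Require Import all_boot all_order all_algebra.
From mathcomp Require Import complex.
From mathcomp Require Import sesquilinear spectral ring lra.
Import Order.TTheory GRing.Theory Num.Theory.
Local Open Scope ring_scope.

Lemma sum_delta (C : nzRingType) (T : finType) (i : T) (F : T -> C) :
  \sum_j F j * (i == j)%:R = F i.
Proof.
rewrite (bigD1 i) //= eqxx mulr1 big1 ?addr0 // => j /negbTE.
by rewrite eq_sym => ->; rewrite mulr0.
Qed.

Lemma prod_ind (C : comNzRingType) (T : finType) (P : pred T) (b : T -> bool) :
  \prod_(k | P k) ((b k)%:R : C) = ([forall k, P k ==> b k])%:R.
Proof.
case: (boolP [forall k, P k ==> b k]) => h.
  by rewrite big1 // => k Pk; move/forallP: h => /(_ k); rewrite Pk /= => ->.
move/forallPn: h => [k]; rewrite negb_imply => /andP [Pk nbk].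
by rewrite (bigD1 k) //= (negbTE nbk) mul0r.
Qed.

Lemma CS_sum (C : numClosedFieldType) r (x : 'I_r -> C) :
  (\sum_i x i) * (\sum_i x i)^* <= r%:R * \sum_i x i * (x i)^*.
Proof.
have H : 0 <= \sum_i \sum_j (x i - x j) * (x i - x j)^*.
  by apply: sumr_ge0 => i _; apply: sumr_ge0 => j _; exact: mul_conjC_ge0.
set S := \sum_i x i; set Q := \sum_i x i * (x i)^*.
have E : \sum_i \sum_j (x i - x j) * (x i - x j)^* = 2%:R * (r%:R * Q - S * S^*).
  transitivity (\sum_i \sum_j (x i * (x i)^* + x j * (x j)^* - x i * (x j)^* - x j * (x i)^*)).
    by apply: eq_bigr => i _; apply: eq_bigr => j _; rewrite rmorphB /=; ring.
  transitivity (\sum_i (r%:R * (x i * (x i)^*) + Q - x i * S^* - S * (x i)^*)).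
    apply: eq_bigr => i _; rewrite !sumrB big_split /= sumr_const card_ord.
    by rewrite /S rmorph_sum /= mulr_sumr mulr_suml mulr_natl.
  rewrite !sumrB big_split /= sumr_const card_ord -mulr_sumr -mulr_suml -mulr_sumr.
  rewrite /S rmorph_sum /= -/S -/Q -mulr_natr; ring.
by move: H; rewrite E pmulr_rge0 ?ltr0n // subr_ge0.
Qed.

Section Sesq.
Local Open Scope sesquilinear_scope.


Lemma trCE (C : numClosedFieldType) m (X : 'M[C]_m) :
  \tr (X *m X^t*) = \sum_i \sum_j X i j * (X i j)^*.
Proof.
by rewrite /mxtrace; apply: eq_bigr => i _; rewrite mxE; apply: eq_bigr => j _; rewrite !mxE.
Qed.

Lemma AK_gen (C : numClosedFieldType) r d (A : 'M[C]_d) (B : 'M[C]_(r, d)) :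
  (A <= B)%MS -> B *m B^t* = 1%:M -> A *m B^t* *m B = A.
Proof.
by move=> AB Bu; rewrite -{1}(mulmxKpV AB) -(mulmxA _ B) Bu mulmx1 mulmxKpV.
Qed.

Lemma key_rank (C : numClosedFieldType) d (A : 'M[C]_d) : A^t* = A ->
  \tr A * (\tr A)^* <= (\rank A)%:R * \tr (A *m A).
Proof.
move=> Ah.
set B := schmidt (row_base A).
have Bu : B *m B^t* = 1%:M.
  by apply/unitarymxP; apply: schmidt_unitarymx; exact: rank_leq_col.
have AB : (A <= B)%MS by apply: submx_trans (schmidt_sub _); rewrite eq_row_base.
have AK : A *m B^t* *m B = A.
  exact: AK_gen.
set X := B *m A *m B^t*.
have trX : \tr X = \tr A.
  by rewrite /X mxtrace_mulC mulmxA mxtrace_mulC mulmxA AK.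
have XX : \tr (X *m X) = \tr (A *m A).
  have -> : X *m X = B *m (A *m B^t* *m B *m A *m B^t*) by rewrite /X !mulmxA.
  rewrite mxtrace_mulC AK AK_gen //; last exact: mulmx_sub.
have Xh : X^t* = X.
  by rewrite /X !trmx_mul !map_mxM trmxCK Ah mulmxA.
rewrite -trX -XX; have -> : \tr (X *m X) = \tr (X *m X^t*) by rewrite Xh.
rewrite trCE.
have H1 : \tr X * (\tr X)^* <= (\rank A)%:R * \sum_i X i i * (X i i)^* := @CS_sum _ _ (fun i : 'I_(\rank A) => X i i).
apply: le_trans H1 _.

apply: ler_wpM2l; first exact: ler0n.
apply: ler_sum => i _.
rewrite (bigD1 i) //= lerDl.
by apply: sumr_ge0 => j _; exact: mul_conjC_ge0.
Qed.

End Sesq.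

Lemma mxvec_index_bij d : bijective (uncurry (@mxvec_index d d)).
Proof. exact: onT_bij (curry_mxvec_bij d d). Qed.

Lemma complete (R : rcfType) d (lam : 'I_(d ^ 2) -> 'M[R[i]]_d) : (0 < d)%N -> gm_basis lam ->
  forall a b c e : 'I_d, \sum_t (lam t a b)^* * lam t c e = d%:R * ((a == c) && (b == e))%:R.
Proof.
move=> d0 [L0 Lh Ltr Lorth].
pose M : 'M[R[i]]_(d * d) := \matrix_(t, j) mxvec (lam t) 0 j.
have MM : M *m map_mx Num.conj M^T = d%:R%:M.
  apply/matrixP => t u; rewrite !mxE.
  rewrite (reindex (uncurry (@mxvec_index d d))) /=; last first.
    by apply: onW_bij; exact: mxvec_index_bij.
  transitivity (\sum_(p : 'I_d * 'I_d) lam t p.1 p.2 * lam u p.2 p.1).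
    by apply: eq_bigr => -[a b] _ /=; rewrite !mxE !mxvecE (Lh u b a).
  rewrite -(pair_bigA _ (fun a b => lam t a b * lam u b a)) /=.
  have -> : \sum_a \sum_b lam t a b * lam u b a = \tr (lam t *m lam u).
    by rewrite /mxtrace; apply: eq_bigr => a _; rewrite mxE.
  rewrite -[_ *+ (t == u)]mulr_natr.
  case: (boolP (val t == 0%N)) => [/eqP t0 | t0]; case: (boolP (val u == 0%N)) => [/eqP u0 | u0].
  - rewrite L0 // L0 // mulmx1 mxtrace1.
    have -> : t = u by apply: val_inj; rewrite /= t0 u0.
    by rewrite eqxx mulr1.
  - rewrite L0 // mul1mx Ltr //; last by apply/eqP.
    by rewrite (_ : (t == u) = false) ?mulr0 //; apply: contraNF u0 => /eqP <-; rewrite t0.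
  - rewrite (L0 u) // mulmx1 Ltr //; last by apply/eqP.
    by rewrite (_ : (t == u) = false) ?mulr0 //; apply: contraNF t0 => /eqP ->; rewrite u0.
  - by rewrite Lorth ?lt0n.
have dU : (d%:R : R[i]) != 0 by rewrite pnatr_eq0 -lt0n.
have MM' : map_mx Num.conj M^T *m M = d%:R%:M.
  have : (d%:R^-1 *: M) *m map_mx Num.conj M^T = 1%:M.
    by rewrite -scalemxAl MM scale_scalar_mx mulVf.
  move/mulmx1C; rewrite -scalemxAr => /(congr1 (fun X => d%:R *: X)).
  by rewrite scalerA mulfV // scale1r => ->; rewrite scale_scalar_mx mulr1.
move=> a b c e.
move/matrixP: MM' => /(_ (mxvec_index a b) (mxvec_index c e)).
rewrite !mxE => MM'.
transitivity (\sum_t (map_mx Num.conj M^T) (mxvec_index a b) t * M t (mxvec_index c e)).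
  by apply: eq_bigr => t _; rewrite !mxE !mxvecE.
rewrite MM'.
have -> : (mxvec_index a b == mxvec_index c e) = ((a, b) == (c, e)).
  exact: (inj_eq (bij_inj (mxvec_index_bij d)) (a, b) (c, e)).
by rewrite -[d%:R *+ _]mulr_natr.
Qed.

Lemma split_sets (C : nmodType) n (F : {set 'I_n} -> C) :
  \sum_(alpha : {set 'I_n}) F alpha = \sum_(alpha : {set 'I_n} | (2 <= #|alpha|)%N) F alpha + F set0 + \sum_i F [set i].
Proof.
rewrite (bigID (fun alpha : {set 'I_n} => (2 <= #|alpha|)%N)) /= -addrA; congr (_ + _).
rewrite (bigD1 set0) /=; last by rewrite cards0.
congr (_ + _).
rewrite -(big_imset _ (in2W (@set1_inj _))) /=.
apply: eq_bigl => A; apply/andP/imsetP.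
  move=> [h1 h2]; have /cards1P [x ->] : #|A| == 1%N.
    by rewrite eqn_leq -ltnS ltnNge h1 /= lt0n cards_eq0.
  by exists x.
by move=> [x _ ->]; rewrite cards1 /=; split => //; apply/eqP/setP => /(_ x); rewrite !inE eqxx.
Qed.

Lemma sum_all (C : nmodType) n D (G : {ffun 'I_n -> 'I_D} -> C) :
  \sum_(alpha : {set 'I_n}) \sum_(s : {ffun 'I_n -> 'I_D} | [forall k : 'I_n, (val (s k) != 0%N) == (k \in alpha)]) G s
  = \sum_s G s.
Proof.
rewrite [RHS](partition_big (fun s : {ffun 'I_n -> 'I_D} => [set k | val (s k) != 0%N]) xpredT) //.
apply: eq_bigr => A _; apply: eq_bigl => s /=.
apply/forallP/eqP => [h | <- k]; last by rewrite inE.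
by apply/setP => k; rewrite inE; move/eqP: (h k).
Qed.

Lemma convex_sq (C : numClosedFieldType) m (w c : 'I_m -> C) :
  (forall j, 0 <= w j) -> \sum_j w j = 1 -> (forall j, (c j)^* = c j) ->
  (\sum_j w j * c j) ^+ 2 <= \sum_j w j * c j ^+ 2.
Proof.
move=> w0 w1 cr.
set mu := \sum_j w j * c j.
have mur : mu^* = mu.
  rewrite /mu rmorph_sum; apply: eq_bigr => j _.
  by rewrite rmorphM /= cr conj_Creal // ger0_real.
have H : 0 <= \sum_j w j * ((c j - mu) * (c j - mu)^*).
  by apply: sumr_ge0 => j _; apply: mulr_ge0 => //; exact: mul_conjC_ge0.
have E : \sum_j w j * ((c j - mu) * (c j - mu)^*) = \sum_j w j * c j ^+ 2 - mu ^+ 2.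
  transitivity (\sum_j (w j * c j ^+ 2 - 2%:R * mu * (w j * c j) + mu ^+ 2 * w j)).
    by apply: eq_bigr => j _; rewrite rmorphB /= cr mur; ring.
  rewrite big_split sumrB /= -!mulr_sumr w1 -/mu; ring.
by move: H; rewrite E subr_ge0.
Qed.

Definition pure {R : rcfType} {n d} (psi : cfg n d -> R[i]) : op R n d :=
  fun x y => psi x * (psi y)^*.

Lemma tensor_herm (R : rcfType) n d (lam : 'I_(d ^ 2) -> 'M[R[i]]_d) (s : {ffun 'I_n -> 'I_(d ^ 2)}) (x y : cfg n d) :
  (forall i, hermitian_mx (lam i)) ->
  tensor_op lam s y x = (tensor_op lam s x y)^*.
Proof.
move=> Lh; rewrite /tensor_op rmorph_prod; apply: eq_bigr => k _ /=.
exact: Lh.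
Qed.

Lemma corr_real (R : rcfType) n d (lam : 'I_(d ^ 2) -> 'M[R[i]]_d) (psi : cfg n d -> R[i]) (s : {ffun 'I_n -> 'I_(d ^ 2)}) :
  (forall i, hermitian_mx (lam i)) ->
  (corr lam (pure psi) s)^* = corr lam (pure psi) s.
Proof.
move=> Lh.
rewrite /corr /tr_op /pure rmorph_sum /= [RHS]exchange_big; apply: eq_bigr => x _.
rewrite rmorph_sum; apply: eq_bigr => y _ /=.
rewrite !rmorphM /= (conjCK (psi y)) (@tensor_herm _ _ _ lam s x y Lh) (conjCK (tensor_op lam s x y)); ring.
Qed.

Lemma corr_mix (R : rcfType) n d (lam : 'I_(d ^ 2) -> 'M[R[i]]_d) m (p : 'I_m -> R)
   (psi : 'I_m -> cfg n d -> R[i]) (rho : op R n d) (s : {ffun 'I_n -> 'I_(d ^ 2)}) :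
  (forall x y : cfg n d, rho x y = \sum_(j < m) (p j)%:C%C * psi j x * (psi j y)^*) ->
  corr lam rho s = \sum_j (p j)%:C%C * corr lam (pure (psi j)) s.
Proof.
move=> Hr; rewrite /corr /tr_op /pure.
transitivity (\sum_x \sum_j \sum_y (p j)%:C%C * (psi j x * (psi j y)^* * tensor_op lam s y x)).
  apply: eq_bigr => x _; rewrite exchange_big; apply: eq_bigr => y _.
  by rewrite Hr mulr_suml; apply: eq_bigr => j _; ring.
rewrite exchange_big; apply: eq_bigr => j _; rewrite mulr_sumr; apply: eq_bigr => x _.
by rewrite mulr_sumr.
Qed.
Lemma conjK (R : rcfType) (x : R[i]) : x^*^* = x.
Proof. exact: conjCK. Qed.

Lemma complete2 (R : rcfType) d (lam : 'I_(d ^ 2) -> 'M[R[i]]_d) : (0 < d)%N -> gm_basis lam ->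
  forall a b c e : 'I_d, \sum_t lam t a b * (lam t c e)^* = d%:R * ((a == c)%:R * (b == e)%:R).
Proof.
move=> d0 gm a b c e.
rewrite (eq_bigr (fun t => (lam t c e)^* * lam t a b)); last by move=> t _; rewrite mulrC.
rewrite complete // (eq_sym c) (eq_sym e).
by case: (a == c); case: (b == e) => /=; rewrite ?mulr0 ?mulr1 ?mul0r ?mul1r ?mulr1n ?mulr0n ?mulr0 ?mulr1.
Qed.

Lemma ffun_forall_eq (I J : finType) (f g : {ffun I -> J}) :
  [forall k, true ==> (f k == g k)] = (f == g).
Proof.
apply/forallP/eqP => [h|-> k]; last by rewrite eqxx.
by apply/ffunP => k; exact/eqP/h.
Qed.

Lemma total (R : rcfType) n d (lam : 'I_(d ^ 2) -> 'M[R[i]]_d) (psi : cfg n d -> R[i]) :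
  (0 < d)%N -> gm_basis lam -> unit_vec psi ->
  \sum_(s : {ffun 'I_n -> 'I_(d ^ 2)}) (corr lam (pure psi) s) ^+ 2 = (d ^ n)%:R.
Proof.
move=> d0 gm u; have Lh : forall i, hermitian_mx (lam i) by case: gm.
have TT : forall x y x' y' : cfg n d,
    \sum_(s : {ffun 'I_n -> 'I_(d ^ 2)}) tensor_op lam s y x * (tensor_op lam s y' x')^*
    = (d ^ n)%:R * ((y == y')%:R * (x == x')%:R).
  move=> x y x' y'.
  transitivity (\sum_(s : {ffun 'I_n -> 'I_(d ^ 2)})
     \prod_k (lam (s k) (y k) (x k) * (lam (s k) (y' k) (x' k))^*)).
    by apply: eq_bigr => s _; rewrite /tensor_op rmorph_prod big_split.
  rewrite -(bigA_distr_bigA (fun k t => lam t (y k) (x k) * (lam t (y' k) (x' k))^*)) /=.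
  rewrite (eq_bigr (fun k => d%:R * ((y k == y' k)%:R * (x k == x' k)%:R))); last first.
    by move=> k _; exact: complete2.
  by rewrite !big_split /= prodr_const card_ord natrX !prod_ind !ffun_forall_eq.
transitivity (\sum_(s : {ffun 'I_n -> 'I_(d ^ 2)}) corr lam (pure psi) s * (corr lam (pure psi) s)^*).
  by apply: eq_bigr => s _; rewrite corr_real // expr2.
transitivity (\sum_(s : {ffun 'I_n -> 'I_(d ^ 2)}) \sum_x \sum_y \sum_x' \sum_y'
   (pure psi x y * (pure psi x' y')^*) * (tensor_op lam s y x * (tensor_op lam s y' x')^*)).
  apply: eq_bigr => s _; rewrite /corr /tr_op rmorph_sum mulr_suml; apply: eq_bigr => x _.
  rewrite mulr_suml; apply: eq_bigr => y _; rewrite mulr_sumr; apply: eq_bigr => x' _.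
  rewrite rmorph_sum mulr_sumr; apply: eq_bigr => y' _; rewrite rmorphM /=; ring.
transitivity (\sum_x \sum_y \sum_x' \sum_y'
   (pure psi x y * (pure psi x' y')^*) * ((d ^ n)%:R * ((y == y')%:R * (x == x')%:R))).
  rewrite exchange_big; apply: eq_bigr => x _; rewrite exchange_big; apply: eq_bigr => y _.
  rewrite exchange_big; apply: eq_bigr => x' _; rewrite exchange_big; apply: eq_bigr => y' _.
  by rewrite -mulr_sumr TT.
transitivity (\sum_(x : cfg n d) \sum_(y : cfg n d) (d ^ n)%:R * (pure psi x y * (pure psi x y)^*)).
  apply: eq_bigr => x _; apply: eq_bigr => y _.
  transitivity (\sum_(x' : cfg n d) (\sum_(y' : cfg n d) ((d ^ n)%:R * (pure psi x y * (pure psi x' y')^*)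
      * (x == x')%:R) * (y == y')%:R)).
    by apply: eq_bigr => x' _; apply: eq_bigr => y' _; ring.
  rewrite (eq_bigr (fun x' => (d ^ n)%:R * (pure psi x y * (pure psi x' y)^*) * (x == x')%:R)); last first.
    by move=> x' _; exact: sum_delta.
  exact: sum_delta.
transitivity ((d ^ n)%:R * ((\sum_x psi x * (psi x)^*) * (\sum_y psi y * (psi y)^*))).
  rewrite mulr_suml mulr_sumr; apply: eq_bigr => x _; rewrite !mulr_sumr; apply: eq_bigr => y _.
  by rewrite /pure rmorphM /= conjK; ring.
by rewrite u !mulr1.
Qed.
Definition agree {n d : nat} (i : 'I_n) (x y : cfg n d) := [forall k, (k != i) ==> (x k == y k)].

Lemma agree_sym (n d : nat) (i : 'I_n) (x y : cfg n d) : agree i x y = agree i y x.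
Proof. by apply: eq_forallb => k; rewrite (eq_sym (x k)). Qed.

Lemma reduced1E (R : rcfType) n d (psi : cfg n d -> R[i]) (i : 'I_n) a b :
  reduced1 psi i a b = \sum_(x : cfg n d) \sum_(y : cfg n d)
     ((x i == a)%:R * (y i == b)%:R * (agree i x y)%:R) * (psi x * (psi y)^*).
Proof.
rewrite mxE (big_mkcond (fun x : cfg n d => x i == a)) /=; apply: eq_bigr => x _.
rewrite big_mkcond /=; case: (x i == a) => /=.
  by apply: eq_bigr => y _; rewrite /agree; case: (y i == b); case: [forall _, _] => /=;
     rewrite ?mul1r ?mul0r ?mulr1 ?mulr0.
by rewrite big1 // => y _; rewrite !mul0r.
Qed.

Lemma exchange4 (C : nmodType) (A B X Y : finType) (G : A -> B -> X -> Y -> C) :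
  \sum_a \sum_b \sum_x \sum_y G a b x y = \sum_x \sum_y \sum_a \sum_b G a b x y.
Proof.
rewrite pair_big (eq_bigr (fun p => \sum_(q : X * Y) G p.1 p.2 q.1 q.2)); last first.
  by move=> p _; rewrite pair_big.
rewrite exchange_big [RHS]pair_big; apply: eq_bigr => q _.
by rewrite pair_big.
Qed.

Lemma red_pair (R : rcfType) n d (psi : cfg n d -> R[i]) (i : 'I_n) (L : 'M[R[i]]_d) :
  \sum_a \sum_b reduced1 psi i a b * L b a =
  \sum_(x : cfg n d) \sum_(y : cfg n d) (agree i x y)%:R * (psi x * (psi y)^*) * L (y i) (x i).
Proof.
transitivity (\sum_a \sum_b \sum_(x : cfg n d) \sum_(y : cfg n d)
   (((agree i x y)%:R * (psi x * (psi y)^*) * L b a) * (y i == b)%:R) * (x i == a)%:R).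
  apply: eq_bigr => a _; apply: eq_bigr => b _; rewrite reduced1E mulr_suml.
  apply: eq_bigr => x _; rewrite mulr_suml; apply: eq_bigr => y _; ring.
rewrite exchange4; apply: eq_bigr => x _; apply: eq_bigr => y _.
rewrite (eq_bigr (fun a => ((agree i x y)%:R * (psi x * (psi y)^*) * L (y i) a) * (x i == a)%:R)).
  exact: sum_delta.
by move=> a _; rewrite -mulr_suml sum_delta.
Qed.
Lemma corr_single (R : rcfType) n d (lam : 'I_(d ^ 2) -> 'M[R[i]]_d) (psi : cfg n d -> R[i])
    (i : 'I_n) (s : {ffun 'I_n -> 'I_(d ^ 2)}) :
  gm_basis lam -> (forall k, k != i -> val (s k) = 0%N) ->
  corr lam (pure psi) s = \sum_a \sum_b reduced1 psi i a b * lam (s i) b a.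
Proof.
case=> L0 _ _ _ hs.
rewrite red_pair /corr /tr_op /pure; apply: eq_bigr => x _; apply: eq_bigr => y _.
rewrite /tensor_op (bigD1 i) //= (eq_bigr (fun k => ((y k == x k))%:R)); last first.
  by move=> k ki; rewrite L0 ?(hs k ki) // mxE.
rewrite prod_ind -/(agree i y x) agree_sym; ring.
Qed.

Lemma corr_s0 (R : rcfType) n d (lam : 'I_(d ^ 2) -> 'M[R[i]]_d) (psi : cfg n d -> R[i])
    (s : {ffun 'I_n -> 'I_(d ^ 2)}) :
  gm_basis lam -> unit_vec psi -> (forall k, val (s k) = 0%N) ->
  corr lam (pure psi) s = 1.
Proof.
case=> L0 _ _ _ u hs.
rewrite -u /corr /tr_op /pure; apply: eq_bigr => x _.
rewrite (eq_bigr (fun y => psi x * (psi y)^* * (x == y)%:R)); first exact: sum_delta.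
move=> y _; rewrite /tensor_op (eq_bigr (fun k => ((y k == x k))%:R)); last first.
  by move=> k _; rewrite L0 ?(hs k) // mxE.
by rewrite prod_ind ffun_forall_eq (eq_sym y).
Qed.

Lemma red_tr (R : rcfType) n d (lam : 'I_(d ^ 2) -> 'M[R[i]]_d) (psi : cfg n d -> R[i])
    (i : 'I_n) : (0 < d)%N ->
  gm_basis lam -> unit_vec psi -> \tr (reduced1 psi i) = 1.
Proof.
move=> d0 gm u.
have d20 : (0 < d ^ 2)%N by rewrite expn_gt0 d0.
pose s0 : {ffun 'I_n -> 'I_(d ^ 2)} := [ffun => Ordinal d20].
have L0 : lam (s0 i) = 1%:M by case: gm => L0 _ _ _; rewrite L0 // ffunE.
rewrite -(@corr_s0 R n d lam psi s0) //; last by move=> k; rewrite ffunE.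
rewrite (@corr_single R n d lam psi i) //; last by move=> k _; rewrite ffunE.
rewrite L0 /mxtrace; apply: eq_bigr => a _.
rewrite (eq_bigr (fun b => reduced1 psi i a b * (a == b)%:R)); first by rewrite sum_delta.
by move=> b _; congr (_ * _); rewrite mxE eq_sym.
Qed.

Lemma red_herm (R : rcfType) n d (psi : cfg n d -> R[i]) (i : 'I_n) a b :
  (reduced1 psi i b a)^* = reduced1 psi i a b.
Proof.
rewrite !reduced1E rmorph_sum exchange_big; apply: eq_bigr => y _.
rewrite rmorph_sum; apply: eq_bigr => x _ /=.
rewrite !rmorphM /= !conjC_nat conjK agree_sym; ring.
Qed.
Definition HS {R : rcfType} {d} (A : 'M[R[i]]_d) := \sum_a \sum_b A a b * (A a b)^*.

Lemma hs_complete (R : rcfType) n d (lam : 'I_(d ^ 2) -> 'M[R[i]]_d) (psi : cfg n d -> R[i])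
    (i : 'I_n) : (0 < d)%N -> gm_basis lam ->
  \sum_t (\sum_a \sum_b reduced1 psi i a b * lam t b a) *
         (\sum_a \sum_b reduced1 psi i a b * lam t b a)^*
  = d%:R * HS (reduced1 psi i).
Proof.
move=> d0 gm; set rho := reduced1 psi i.
transitivity (\sum_t \sum_a \sum_b \sum_a' \sum_b'
   (rho a b * (rho a' b')^*) * (lam t b a * (lam t b' a')^*)).
  apply: eq_bigr => t _; rewrite mulr_suml; apply: eq_bigr => a _.
  rewrite mulr_suml; apply: eq_bigr => b _; rewrite rmorph_sum mulr_sumr; apply: eq_bigr => a' _.
  rewrite rmorph_sum mulr_sumr; apply: eq_bigr => b' _; rewrite rmorphM /=; ring.
transitivity (\sum_a \sum_b \sum_a' \sum_b'
   (rho a b * (rho a' b')^*) * (d%:R * ((b == b')%:R * (a == a')%:R))).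
  rewrite exchange_big; apply: eq_bigr => a _; rewrite exchange_big; apply: eq_bigr => b _.
  rewrite exchange_big; apply: eq_bigr => a' _; rewrite exchange_big; apply: eq_bigr => b' _.
  by rewrite -mulr_sumr complete2.
rewrite /HS mulr_sumr; apply: eq_bigr => a _; rewrite mulr_sumr; apply: eq_bigr => b _.
transitivity (\sum_a' (\sum_b' (d%:R * (rho a b * (rho a' b')^*) * (a == a')%:R) * (b == b')%:R)).
  by apply: eq_bigr => a' _; apply: eq_bigr => b' _; ring.
rewrite (eq_bigr (fun a' => d%:R * (rho a b * (rho a' b)^*) * (a == a')%:R)); last first.
  by move=> a' _; exact: sum_delta.
exact: sum_delta.
Qed.

Lemma tau_single (R : rcfType) n d (lam : 'I_(d ^ 2) -> 'M[R[i]]_d) (psi : cfg n d -> R[i])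
    (i : 'I_n) : (0 < d)%N -> gm_basis lam -> unit_vec psi ->
  tau_norm2 lam (pure psi) [set i] = d%:R * HS (reduced1 psi i) - 1.
Proof.
move=> d0 gm u; have Lh : forall t, hermitian_mx (lam t) by case: gm.
have d20 : (0 < d ^ 2)%N by rewrite expn_gt0 d0.
pose t0 : 'I_(d ^ 2) := Ordinal d20.
pose emb (t : 'I_(d ^ 2)) : {ffun 'I_n -> 'I_(d ^ 2)} := [ffun k => if k == i then t else t0].
pose g t := \sum_a \sum_b reduced1 psi i a b * lam t b a.
have cg : forall t, corr lam (pure psi) (emb t) = g t.
  move=> t; rewrite (@corr_single R n d lam psi i) // ?ffunE ?eqxx //.
  by move=> k /negbTE ki; rewrite ffunE ki.
have gr : forall t, (g t)^* = g t by move=> t; rewrite -cg corr_real.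
rewrite /tau_norm2 (reindex_onto emb (fun s => s i)) /=; last first.
  move=> s /forallP Ps; apply/ffunP => k; rewrite ffunE.
  case: eqP => [-> //|/eqP ki]; apply: val_inj => /=.
  by move: (Ps k); rewrite inE (negbTE ki) eqbF_neg negbK => /eqP ->.
rewrite (eq_bigl (fun t => t != t0)); last first.
  move=> t; rewrite ffunE eqxx eqxx andbT.
  apply/forallP/idP => [/(_ i)|h k].
    by rewrite ffunE inE eqxx eqb_id; apply: contra => /eqP ->.
  rewrite ffunE; case: ifP => [/eqP E|ki]; last by rewrite in_set1 ki.
  subst k; rewrite in_set1 eqxx eqb_id.
  by apply: contra h => /eqP h; apply/eqP/val_inj.
rewrite -(@hs_complete R n d lam psi i) // -/g.
have g0 : g t0 = 1.
  rewrite -cg (@corr_s0 R n d lam psi) // => k.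
  by rewrite ffunE; case: (k == i).
have g0' : \sum_a \sum_b reduced1 psi i a b * lam t0 b a = 1 := g0.
rewrite [in RHS](bigD1 t0) //= gr g0' mul1r g0 addrAC subrr add0r; apply: eq_bigr => t _.
by rewrite cg expr2 gr.
Qed.
Lemma tau_empty (R : rcfType) n d (lam : 'I_(d ^ 2) -> 'M[R[i]]_d) (psi : cfg n d -> R[i]) :
  (0 < d)%N -> gm_basis lam -> unit_vec psi ->
  tau_norm2 lam (pure psi) set0 = 1.
Proof.
move=> d0 gm u.
have d20 : (0 < d ^ 2)%N by rewrite expn_gt0 d0.
pose s0 : {ffun 'I_n -> 'I_(d ^ 2)} := [ffun => Ordinal d20].
rewrite /tau_norm2 (big_pred1 s0); last first.
  move=> s /=; apply/forallP/eqP => [h|-> k]; last by rewrite ffunE inE.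
  apply/ffunP => k; rewrite ffunE; apply: val_inj => /=.
  by move: (h k); rewrite inE eqbF_neg negbK => /eqP.
by rewrite (@corr_s0 R n d lam psi) ?expr1n // => k; rewrite ffunE.
Qed.

Section HSB.
Local Open Scope sesquilinear_scope.
Lemma hs_bound (R : rcfType) n d (lam : 'I_(d ^ 2) -> 'M[R[i]]_d) (psi : cfg n d -> R[i])
    (i : 'I_n) (k : nat) : (0 < d)%N -> gm_basis lam -> unit_vec psi -> (0 < k)%N ->
  (\rank (reduced1 psi i) <= k)%N ->
  d%:R / k%:R <= d%:R * HS (reduced1 psi i).
Proof.
move=> d0 gm u k0 rk.
set A := reduced1 psi i.
have Ah : A^t* = A.
  by apply/matrixP => a b; rewrite mxE [A^T a b]mxE /A red_herm.
have H0 : 0 <= HS A by apply: sumr_ge0 => a _; apply: sumr_ge0 => b _; exact: mul_conjC_ge0.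
have HE : \tr (A *m A) = HS A by rewrite -{2}Ah trCE.
have := key_rank _ _ _ Ah; rewrite HE (@red_tr R n d lam psi i) // conjC1 mulr1 => h1.
have h2 : 1 <= k%:R * HS A.
  apply: le_trans h1 _; apply: ler_wpM2r => //; by rewrite ler_nat.
apply: ler_wpM2l; first exact: ler0n.
by rewrite -[_^-1]mulr1 ler_pdivrMl // ltr0n.
Qed.

End HSB.

Lemma pure_bound (R : rcfType) n d (k : 'I_n -> nat) (lam : 'I_(d ^ 2) -> 'M[R[i]]_d)
    (psi : cfg n d -> R[i]) :
  (0 < d)%N -> (forall i, (0 < k i)%N) -> gm_basis lam -> unit_vec psi ->
  (forall i : 'I_n, (\rank (reduced1 psi i) <= k i)%N) ->
  C2 lam (pure psi) <= (d ^ n)%:R + n%:R - 1 - \sum_(i < n) d%:R / (k i)%:R.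
Proof.
move=> d0 k0 gm u rk.
have E := @split_sets _ _ (tau_norm2 lam (pure psi)).
rewrite /tau_norm2 in E; rewrite sum_all (@total R n d lam psi) // in E.
have E2 : C2 lam (pure psi) = (d ^ n)%:R - 1 - \sum_i (d%:R * HS (reduced1 psi i) - 1).
  rewrite E -/(tau_norm2 lam (pure psi) set0) (@tau_empty R n d lam psi) //.
  rewrite (eq_bigr (fun i => d%:R * HS (reduced1 psi i) - 1)); last first.
    by move=> i _; rewrite -/(tau_norm2 lam (pure psi) [set i]) (@tau_single R n d lam psi).
  rewrite /C2 /tau_norm2; ring.
have S : \sum_i (d%:R / (k i)%:R - 1) <= \sum_i (d%:R * HS (reduced1 psi i) - 1 : R[i]).
  apply: ler_sum => i _; rewrite lerD2r.
  exact: (@hs_bound R n d lam psi i (k i)).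
have -> : (d ^ n)%:R + n%:R - 1 - \sum_(i < n) d%:R / (k i)%:R
    = (d ^ n)%:R - 1 - \sum_i (d%:R / (k i)%:R - 1) :> R[i].
  by rewrite sumrB sumr_const card_ord; ring.
by rewrite E2; apply: lerB.
Qed.

Local Open Scope complex_scope.

Lemma C2_mix (R : rcfType) n d (lam : 'I_(d ^ 2) -> 'M[R[i]]_d) m (p : 'I_m -> R)
   (psi : 'I_m -> cfg n d -> R[i]) (rho : op R n d) :
  (forall t, hermitian_mx (lam t)) -> (forall j, 0 <= p j) -> \sum_j p j = 1 ->
  (forall x y : cfg n d, rho x y = \sum_(j < m) (p j)%:C%C * psi j x * (psi j y)^*) ->
  C2 lam rho <= \sum_j (p j)%:C%C * C2 lam (pure (psi j)).
Proof.
move=> Lh p0 p1 Hr.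
have w0 : forall j, 0 <= (p j)%:C%C by move=> j; rewrite ler0c.
have w1 : \sum_j (p j)%:C%C = 1 :> R[i] by rewrite -(rmorph_sum (real_complex R)) p1.
have eqR : \sum_j (p j)%:C%C * C2 lam (pure (psi j)) =
  \sum_(A : {set 'I_n} | (2 <= #|A|)%N)
   \sum_(s : {ffun 'I_n -> 'I_(d ^ 2)} | [forall k : 'I_n, (val (s k) != 0%N) == (k \in A)])
    \sum_j (p j)%:C%C * corr lam (pure (psi j)) s ^+ 2.
  rewrite /C2 /tau_norm2.
  rewrite (eq_bigr (fun j => \sum_(A : {set 'I_n} | (2 <= #|A|)%N)
   \sum_(s : {ffun 'I_n -> 'I_(d ^ 2)} | [forall k : 'I_n, (val (s k) != 0%N) == (k \in A)])
    (p j)%:C%C * corr lam (pure (psi j)) s ^+ 2)); last first.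
    by move=> j _; rewrite mulr_sumr; apply: eq_bigr => A _; rewrite mulr_sumr.
  rewrite exchange_big; apply: eq_bigr => A _; exact: exchange_big.
rewrite eqR /C2 /tau_norm2; apply: ler_sum => A _; apply: ler_sum => s _.
rewrite (@corr_mix R n d lam m p psi rho s Hr); apply: convex_sq => // j.
exact: corr_real.
Qed.

Theorem theorem3 (R : rcfType) (n d : nat) (k : 'I_n -> nat)
  (lam : 'I_(d ^ 2) -> 'M[R[i]]_d)
  (m : nat) (p : 'I_m -> R) (psi : 'I_m -> cfg n d -> R[i]) (rho : op R n d) :
  (1 <= n)%N -> (2 <= d)%N ->
  (forall i : 'I_n, (1 <= k i <= d)%N) ->
  gm_basis lam ->
  (forall j : 'I_m, 0 <= p j) -> \sum_(j < m) p j = 1 ->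
  (forall j : 'I_m, unit_vec (psi j)) ->
  (forall j : 'I_m, forall i : 'I_n, (\rank (reduced1 (psi j) i) <= k i)%N) ->
  (forall x y : cfg n d, rho x y = \sum_(j < m) (p j)%:C * psi j x * (psi j y)^*) ->
  C2 lam rho <= (d ^ n)%:R + n%:R - 1 - \sum_(i < n) d%:R / (k i)%:R.
Proof.
move=> n1 d2 kb gm p0 p1 u rk Hr.
have d0 : (0 < d)%N by apply: leq_trans d2.
have Lh : forall t, hermitian_mx (lam t) by case: gm.
have k0 : forall i, (0 < k i)%N by move=> i; case/andP: (kb i).
have w1 : \sum_j (p j)%:C = 1 :> R[i] by rewrite -(rmorph_sum (real_complex R)) p1.
apply: le_trans (@C2_mix R n d lam m p psi rho Lh p0 p1 Hr) _.
apply: le_trans (_ : _ <= \sum_j (p j)%:C * ((d ^ n)%:R + n%:R - 1 - \sum_(i < n) d%:R / (k i)%:R)) _.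
  apply: ler_sum => j _; apply: ler_wpM2l; first by rewrite ler0c.
  exact: (@pure_bound R n d k lam (psi j)).
by rewrite -mulr_suml w1 mul1r.
Qed.
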